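(* Let $\mathcal{A}$ be a finite totally ordered alphabet. The monoid $\mathbf{Ch}(\mathcal{A},2)$ is $\mathscr{J}$-trivial, i.e. for $x,y\in\mathbf{Ch}(\mathcal{A},2)$, if $\mathbf{Ch}(\mathcal{A},2)\,x\,\mathbf{Ch}(\mathcal{A},2)=\mathbf{Ch}(\mathcal{A},2)\,y\,\mathbf{Ch}(\mathcal{A},2)$ then $x=y$.
   Context: The Chinese monoid $\mathbf{Ch}(\mathcal{A})$ is the quotient of the free monoid $\mathcal{A}^*$ by the relations $cba=cab=bca$ for $a<b<c$, and $aba=baa$, $bba=bab$ for $a<b$ ($a,b,c\in\mathcal{A}$). $\mathbf{Ch}(\mathcal{A},2)$ is the quotient of $\mathbf{Ch}(\mathcal{A})$ obtained by adding the relations $a^2=a$ for every $a\in\mathcal{A}$. *)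

(* Defs.v *)
From HB Require Import structures.
From mathcomp Require Import all_boot all_order.
From Stdlib Require Import Relation_Operators.
Set Implicit Arguments. Unset Strict Implicit. Unset Printing Implicit Defensive.
Import Order.TTheory.
Local Open Scope order_scope.

Section Chinese.
Context {disp : Order.disp_t} {A : finOrderType disp}.

Definition ch_rel (l r : seq A) : Prop :=
  (exists a b c : A, a < b /\ b < c /\
     ((l = [:: c; b; a] /\ r = [:: c; a; b]) \/
      (l = [:: c; a; b] /\ r = [:: b; c; a]))) \/
  (exists a b : A, a < b /\
     ((l = [:: a; b; a] /\ r = [:: b; a; a]) \/
      (l = [:: b; b; a] /\ r = [:: b; a; b]))).

Definition ch2_rel (l r : seq A) : Prop :=
  ch_rel l r \/ (exists a : A, l = [:: a; a] /\ r = [:: a]).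

Definition ch2_step (u v : seq A) : Prop :=
  exists p s l r, ch2_rel l r /\ u = p ++ l ++ s /\ v = p ++ r ++ s.

Definition ch2_eq : seq A -> seq A -> Prop := clos_refl_sym_trans _ ch2_step.

Definition in_ideal2 (x w : seq A) : Prop :=
  exists p q : seq A, ch2_eq w (p ++ x ++ q).

End Chinese.

(* Main.v *)
Require Import Defs.
From mathcomp Require Import all_boot all_order.
From Stdlib Require Import Relation_Operators.
Set Implicit Arguments. Unset Strict Implicit. Unset Printing Implicit Defensive.
Import Order.TTheory.
Local Open Scope order_scope.

Ltac sq := do 3 rewrite /= ?cats0 -?cats1 -?catA /=.

Section Proof.
Context {disp : Order.disp_t} {A : finOrderType disp}.
Local Notation E := (@ch2_eq disp A).

Lemma Erefl u : E u u. Proof. exact: rst_refl. Qed.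
Lemma Esym u v : E u v -> E v u. Proof. exact: rst_sym. Qed.
Lemma Etr u v w : E u v -> E v w -> E u w. Proof. exact: rst_trans. Qed.

Lemma cong p s u v : E u v -> E (p ++ u ++ s) (p ++ v ++ s).
Proof.
elim=> {u v}.
- move=> u v [p0 [s0 [l [r [Hr [-> ->]]]]]]. apply: rst_step.
  exists (p ++ p0), (s0 ++ s), l, r. by rewrite -!catA.
- move=> u; exact: Erefl.
- move=> u v _ H; exact: Esym.
- move=> u v w _ H1 _ H2; exact: Etr H1 H2.
Qed.

Arguments cong p s {u v}.

Lemma cong_eq p s l r u v : E l r -> u = p ++ l ++ s -> v = p ++ r ++ s -> E u v.
Proof. by move=> H -> ->; apply: cong. Qed.

Arguments cong_eq p s {l r u v}.

Lemma relE l r : ch2_rel l r -> E l r.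
Proof. move=> H; apply: rst_step; exists [::], [::], l, r; by rewrite !cats0. Qed.

Lemma idem a : E [:: a; a] [:: a].
Proof. apply: relE; right; by exists a. Qed.

Lemma r_bba (a b : A) : a < b -> E [:: b; b; a] [:: b; a; b].
Proof. move=> ab; apply: relE; left; right; exists a, b; split=> //; by right. Qed.

Lemma r_aba (a b : A) : a < b -> E [:: a; b; a] [:: b; a; a].
Proof. move=> ab; apply: relE; left; right; exists a, b; split=> //; by left. Qed.

Lemma r_cba (a b c : A) : a < b -> b < c -> E [:: c; b; a] [:: c; a; b].
Proof. move=> ab bc; apply: relE; left; left; exists a, b, c; do 2 split=> //; by left. Qed.

Lemma r_cab (a b c : A) : a < b -> b < c -> E [:: c; a; b] [:: b; c; a].
Proof. move=> ab bc; apply: relE; left; left; exists a, b, c; do 2 split=> //; by right. Qed.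

Lemma leS (x m : A) : x <= m -> x = m \/ x < m.
Proof. rewrite le_eqVlt => /orP [/eqP ->|]; by [left|right]. Qed.


Lemma L1 (m x : A) : x <= m -> E [:: m; x; m] [:: m; x].
Proof.
move=> /leS [->|xm]; first by apply: (cong_eq [::] [:: m] (idem m)).
apply: Etr (Esym (r_bba xm)) _; by apply: (cong_eq [::] [:: x] (idem m)).
Qed.

Lemma L2 (m x y : A) : x <= m -> y <= m -> E [:: m; x; y] [:: m; y; x].
Proof.
move=> /leS [->|xm] /leS [->|ym]; try exact: Erefl.
- exact: r_bba.
- exact: Esym (r_bba xm).
- case: (ltgtP x y) => [xy|yx|->]; last exact: Erefl.
  + exact: Esym (r_cba xy ym).
  + exact: r_cba yx xm.
Qed.

Lemma L1d (c x : A) : c <= x -> E [:: c; x; c] [:: x; c].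
Proof.
move=> /leS [->|cx]; first by apply: (cong_eq [::] [:: x] (idem x)).
apply: Etr (r_aba cx) _; by apply: (cong_eq [:: x] [::] (idem c)).
Qed.

Lemma L2d (c x y : A) : c <= x -> c <= y -> E [:: x; y; c] [:: y; x; c].
Proof.
move=> /leS [<-|cx] /leS [<-|cy]; try exact: Erefl.
- exact: r_aba.
- exact: Esym (r_aba cx).
- case: (ltgtP x y) => [xy|yx|->]; last exact: Erefl.
  + exact: Etr (Esym (r_cab cx xy)) (Esym (r_cba cx xy)).
  + exact: Etr (r_cba cy yx) (r_cab cy yx).
Qed.


Lemma S (m : A) u : all (fun x => x <= m) u -> E (m :: u ++ [:: m]) (m :: u).
Proof.
elim/last_ind: u => [_|u x IH]; first exact: idem.
rewrite all_rcons => /andP [xm /IH {}IH].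
apply: Etr (_ : E _ (m :: u ++ [:: m; x; m])) _.
  by apply: (cong_eq [::] [:: x; m] (Esym IH)); sq.
apply: Etr (_ : E _ (m :: u ++ [:: m; x])) _.
  by apply: (cong_eq (m :: u) [::] (L1 xm)); sq.
by apply: (cong_eq [::] [:: x] IH); sq.
Qed.

Lemma Sw (m : A) u x y : all (fun x => x <= m) u -> x <= m -> y <= m ->
  E (m :: u ++ [:: x; y]) (m :: u ++ [:: y; x]).
Proof.
move=> hu xm ym.
apply: Etr (_ : E _ (m :: u ++ [:: m; x; y])) _.
  by apply: (cong_eq [::] [:: x; y] (Esym (S hu))); sq.
apply: Etr (_ : E _ (m :: u ++ [:: m; y; x])) _.
  by apply: (cong_eq (m :: u) [::] (L2 xm ym)); sq.
by apply: (cong_eq [::] [:: y; x] (S hu)); sq.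
Qed.

Lemma Ab (m : A) V1 a W2 : all (fun x => x <= m) V1 -> a <= m ->
  all (fun x => x <= m) W2 ->
  E (m :: V1 ++ a :: W2 ++ [:: a]) (m :: V1 ++ a :: W2).
Proof.
move=> hV am; elim/last_ind: W2 => [_|W y IH].
  by apply: (cong_eq (m :: V1) [::] (idem a)); sq.
rewrite all_rcons => /andP [ym hW]; have {}IH := IH hW.
have hu : all (fun x => x <= m) (V1 ++ a :: W) by rewrite all_cat hV /= am hW.
apply: Etr (_ : E _ (m :: (V1 ++ a :: W) ++ [:: a; y])) _.
  by apply: (cong_eq [::] [::] (Sw hu ym am)); sq.
by apply: (cong_eq [::] [:: y] IH); sq.
Qed.

Lemma Sd (c : A) u : all (fun x => c <= x) u -> E (c :: u ++ [:: c]) (u ++ [:: c]).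
Proof.
elim: u => [_|x u IH]; first exact: idem.
move=> /= /andP [cx /IH {}IH].
apply: Etr (_ : E _ ([:: c; x; c] ++ u ++ [:: c])) _.
  by apply: (cong_eq [:: c; x] [::] (Esym IH)); sq.
apply: Etr (_ : E _ ([:: x; c] ++ u ++ [:: c])) _.
  by apply: (cong_eq [::] (u ++ [:: c]) (L1d cx)); sq.
by apply: (cong_eq [:: x] [::] IH); sq.
Qed.

Lemma Swd (c : A) u x y : all (fun x => c <= x) u -> c <= x -> c <= y ->
  E (x :: y :: u ++ [:: c]) (y :: x :: u ++ [:: c]).
Proof.
move=> hu cx cy.
apply: Etr (_ : E _ ([:: x; y; c] ++ u ++ [:: c])) _.
  by apply: (cong_eq [:: x; y] [::] (Esym (Sd hu))); sq.
apply: Etr (_ : E _ ([:: y; x; c] ++ u ++ [:: c])) _.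
  by apply: (cong_eq [::] (u ++ [:: c]) (L2d cx cy)); sq.
by apply: (cong_eq [:: y; x] [::] (Sd hu)); sq.
Qed.

Lemma Abd (c : A) W1 a W2 : all (fun x => c <= x) W1 -> c <= a ->
  all (fun x => c <= x) W2 ->
  E (a :: W1 ++ a :: W2 ++ [:: c]) (W1 ++ a :: W2 ++ [:: c]).
Proof.
move=> + ca hW2; elim: W1 => [_|y W IH].
  by apply: (cong_eq [::] (W2 ++ [:: c]) (idem a)); sq.
move=> /= /andP [cy hW]; have {}IH := IH hW.
have hu : all (fun x => c <= x) (W ++ a :: W2) by rewrite all_cat hW /= ca hW2.
apply: Etr (_ : E _ (y :: a :: (W ++ a :: W2) ++ [:: c])) _.
  by apply: (cong_eq [::] [::] (Swd hu ca cy)); sq.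
by apply: (cong_eq [:: y] [::] IH); sq.
Qed.

Lemma mem_split (x : A) s : x \in s -> exists s1 s2, s = s1 ++ x :: s2.
Proof. by case/splitPr=> s1 s2; exists s1, s2. Qed.

Lemma exmin (s : seq A) : s != [::] -> exists2 c, c \in s & all (fun x => c <= x) s.
Proof.
elim: s => // y s IH _.
case: s IH => [|z s] IH; first by exists y; rewrite ?mem_seq1 /= ?lexx.
have [c cs hc] := IH isT.
case: (leP y c) => h.
- exists y; first by rewrite mem_head.
  apply/allP => t; rewrite in_cons => /orP [/eqP -> // | ht].
  apply: le_trans h _; exact: (allP hc).
- exists c; first by rewrite in_cons cs orbT.
  by apply/andP; split; [exact: ltW h | exact: hc].
Qed.

Lemma exmax (s : seq A) : s != [::] -> exists2 c, c \in s & all (fun x => x <= c) s.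
Proof.
elim: s => // y s IH _.
case: s IH => [|z s] IH; first by exists y; rewrite ?mem_seq1 /= ?lexx.
have [c cs hc] := IH isT.
case: (leP c y) => h.
- exists y; first by rewrite mem_head.
  apply/allP => t; rewrite in_cons => /orP [/eqP -> // | ht].
  apply: le_trans _ h; exact: (allP hc).
- exists c; first by rewrite in_cons cs orbT.
  by apply/andP; split; [exact: ltW h | exact: hc].
Qed.

Lemma LA (P : seq A) a : a \in P -> E (a :: P ++ P) (P ++ P).
Proof.
move=> aP.
have [c cP hc] : exists2 c, c \in P & all (fun x => c <= x) P.
  by apply: exmin; case: P aP.
have [P1 [P2 eP]] := mem_split cP.
have aP' : a \in P ++ P1 by rewrite mem_cat aP.
have [W1 [W2 eW]] := mem_split aP'.
have hall : all (fun x => c <= x) (P ++ P1).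
  by rewrite all_cat hc /=; move: hc; rewrite {1}eP all_cat => /andP [].
move: hall; rewrite eW all_cat /= => /and3P [h1 ca h2].
have eq : P ++ P = W1 ++ a :: W2 ++ c :: P2.
  by rewrite {2}eP catA eW -catA.
rewrite eq.
by apply: (cong_eq [::] P2 (Abd h1 ca h2)); sq.
Qed.

Lemma RA (Q : seq A) a : a \in Q -> E (Q ++ Q ++ [:: a]) (Q ++ Q).
Proof.
move=> aQ.
have [m mQ hm] : exists2 m, m \in Q & all (fun x => x <= m) Q.
  by apply: exmax; case: Q aQ.
have [Q1 [Q2 eQ]] := mem_split mQ.
have aQ' : a \in Q2 ++ Q by rewrite mem_cat aQ orbT.
have [W1 [W2 eW]] := mem_split aQ'.
have hall : all (fun x => x <= m) (Q2 ++ Q).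
  by rewrite all_cat hm andbT; move: hm; rewrite {1}eQ all_cat => /andP [_ /andP []].
move: hall; rewrite eW all_cat /= => /and3P [h1 am h2].
have eq : Q ++ Q = Q1 ++ m :: W1 ++ a :: W2.
  by rewrite {1}eQ -catA /= eW.
rewrite catA eq.
by apply: (cong_eq Q1 [::] (Ab h1 am h2)); sq.
Qed.

End Proof.

Arguments cong {disp A} p s {u v}.
Arguments cong_eq {disp A} p s {l r u v}.

Theorem mainTheorem3 (disp : Order.disp_t) (A : finOrderType disp) (x y : seq A) :
  (forall w : seq A, in_ideal2 x w <-> in_ideal2 y w) -> ch2_eq x y.
Proof.
move=> H.
have [p [q Hx]] : in_ideal2 y x.
  by apply/H; exists [::], [::]; rewrite cats0; apply: Erefl.
have [p' [q' Hy]] : in_ideal2 x y.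
  by apply/H; exists [::], [::]; rewrite cats0; apply: Erefl.
set P := p ++ p'; set Q := q' ++ q.
have H1 : ch2_eq x (P ++ x ++ Q).
  apply: Etr Hx _; apply: (cong_eq p q Hy); by rewrite /P /Q; sq.
have H2 : ch2_eq x (P ++ P ++ x ++ Q ++ Q).
  apply: (Etr H1); apply: (cong_eq P Q H1); by rewrite /P /Q; sq.
have La : forall a, a \in P -> ch2_eq (a :: x) x.
  move=> a aP.
  apply: Etr (_ : ch2_eq _ (a :: P ++ P ++ x ++ Q ++ Q)) _.
    by apply: (cong_eq [:: a] [::] H2); sq.
  apply: Etr (Esym H2).
  apply: (cong_eq [::] (x ++ Q ++ Q) (LA aP)); by rewrite /P /Q; sq.
have Ra : forall a, a \in Q -> ch2_eq (x ++ [:: a]) x.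
  move=> a aQ.
  apply: Etr (_ : ch2_eq _ ((P ++ P ++ x ++ Q ++ Q) ++ [:: a])) _.
    by apply: (cong_eq [::] [:: a] H2); sq.
  apply: Etr (Esym H2).
  apply: (cong_eq (P ++ P ++ x) [::] (RA aQ)); by rewrite /P /Q; sq.
have Lr : forall r, all (fun b => b \in P) r -> ch2_eq (r ++ x) x.
  elim=> [_|b r IH /= /andP [bP hr]]; first exact: Erefl.
  apply: Etr (La _ bP); by apply: (cong_eq [:: b] [::] (IH hr)); sq.
have Rr : forall r, all (fun b => b \in Q) r -> ch2_eq (x ++ r) x.
  elim/last_ind=> [_|r b IH]; first by rewrite cats0; apply: Erefl.
  rewrite all_rcons => /andP [bQ hr].
  apply: Etr (Ra _ bQ); rewrite -cats1 catA; by apply: (cong_eq [::] [:: b] (IH hr)); sq.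
apply: Esym; apply: Etr Hy _.
apply: Etr (_ : ch2_eq _ (p' ++ x)) _.
  apply: (cong_eq p' [::] (Rr q' _)); rewrite ?cats0 //.
  by apply/allP => b hb; rewrite mem_cat hb.
apply: Lr; apply/allP => b hb; by rewrite mem_cat hb orbT.
Qed.
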